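(* For every LTL formula $\varphi$ in positive normal form and every $\sigma\in\Sigma^\omega$: $\sigma\models\varphi$ if and only if there exists $\varphi'\in\Delta_{\sigma_0}(\varphi)$ with $\sigma[1\dots]\models\varphi'$. (In the paper's notation: $\varphi\Leftrightarrow\bigvee_{x\in\Sigma,\ \varphi'\in\Delta_x(\varphi)} x\wedge\mathbf X\varphi'$.)
   Context: Fix a finite set $AP$, a finite alphabet $\Sigma$ and $I:\Sigma\to\mathcal P(AP)$. LTL formulae in positive normal form: $\varphi,\psi ::= p \mid \neg p \mid \mathbf{tt} \mid \mathbf{ff} \mid \varphi\wedge\psi \mid \varphi\vee\psi \mid \mathbf{X}\varphi \mid \varphi\,\mathbf{U}\,\psi \mid \varphi\,\mathbf{R}\,\psi$; $\mathbf F\varphi=\mathbf{tt}\,\mathbf U\varphi$, $\mathbf G\varphi=\mathbf{ff}\,\mathbf R\varphi$. Semantics on $\sigma\in\Sigma^\omega$ ($\sigma_i$ the $i$-th symbol, $\sigma[n\dots]$ the suffix from position $n$): $\sigma\models p$ iff $p\in I(\sigma_0)$; $\sigma\models\neg p$ iff $p\notin I(\sigma_0)$; $\mathbf{tt}$ always, $\mathbf{ff}$ never; $\wedge,\vee$ usual; $\sigma\models\mathbf X\varphi$ iff $\sigma[1\dots]\models\varphi$; $\sigma\models\varphi\mathbf U\psi$ iff $\exists n$, $\sigma[j\dots]\models\varphi$ for all $j<n$ and $\sigma[n\dots]\models\psi$; $\sigma\models\varphi\mathbf R\psi$ iff for all $n$, $\sigma[n\dots]\models\psi$ or $\sigma[j\dots]\models\varphi$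 for some $j<n$. A temporal formula is one whose outermost operator is not $\wedge$ or $\vee$; conjunctions of temporal formulae are normalised modulo associativity, commutativity and idempotence ($\mathbf{tt}$ is the empty conjunction). $\mathrm{SIMP}(\varphi\wedge\psi)=\{\varphi'\wedge\psi'\mid\varphi'\in\mathrm{SIMP}(\varphi),\psi'\in\mathrm{SIMP}(\psi)\}$, $\mathrm{SIMP}(\varphi\vee\psi)=\mathrm{SIMP}(\varphi)\cup\mathrm{SIMP}(\psi)$, $\mathrm{SIMP}(\varphi)=\{\varphi\}$ for temporal $\varphi$. For a literal $\ell$ ($p$ or $\neg p$), $x\models p$ iff $p\in I(x)$ and $x\models\neg p$ iff $p\notin I(x)$. Direct partial derivative $\Delta_x$ ($x\in\Sigma$): $\Delta_x(\mathbf{tt})=\{\mathbf{tt}\}$; $\Delta_x(\mathbf{ff})=\emptyset$; $\Delta_x(\ell)=\{\mathbf{tt}\}$ if $x\models\ell$, else $\emptyset$; $\Delta_x(\varphi\vee\psi)=\Delta_x(\varphi)\cup\Delta_x(\psi)$; $\Delta_x(\varphi\wedge\psi)=\{\varphi'\wedge\psi'\mid\varphi'\in\Delta_x(\varphi),\psi'\in\Delta_x(\psi)\}$; $\Delta_x(\mathbf X\varphi)=\mathrm{SIMP}(\varphi)$; $\Delta_x(\varphi\mathbf U\psi)=\Delta_x(\psi)\cup\{\varphi'\wedge(\varphi\mathbf U\psi)\mid\varphi'\in\Delta_x(\varphi)\}$; $\Delta_x(\varphi\mathbf R\psi)=\{\varphi'\wedge\psi'\mid\varphi'\in\Delta_x(\varphi),\psi'\in\Delta_x(\psi)\}\cup\{\psi'\wedge(\varphi\mathbf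 R\psi)\mid\psi'\in\Delta_x(\psi)\}$; $\Delta_x(\mathbf F\varphi)=\Delta_x(\varphi)\cup\{\mathbf F\varphi\}$; $\Delta_x(\mathbf G\varphi)=\{\varphi'\wedge\mathbf G\varphi\mid\varphi'\in\Delta_x(\varphi)\}$. *)

(* Defs.v *)
From mathcomp Require Import all_boot.
Set Implicit Arguments.
Unset Strict Implicit.
Unset Printing Implicit Defensive.

Inductive ltl (AP : Type) : Type :=
| Atom of AP
| NAtom of AP
| Tt
| Ff
| And of ltl AP & ltl AP
| Or of ltl AP & ltl AP
| Next of ltl AP
| Until of ltl AP & ltl AP
| Release of ltl AP & ltl AP.

Arguments Tt {AP}.
Arguments Ff {AP}.

Definition Ev (AP : Type) (phi : ltl AP) := Until Tt phi.
Definition Glob (AP : Type) (phi : ltl AP) := Release Ff phi.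

Definition word (Sigma : Type) := nat -> Sigma.
Definition wsuffix (Sigma : Type) (n : nat) (sigma : word Sigma) : word Sigma :=
  fun i => sigma (n + i).

Section Sem.
Variables (AP Sigma : finType) (I : Sigma -> {set AP}).

Fixpoint sat (sigma : word Sigma) (phi : ltl AP) : Prop :=
  match phi with
  | Atom p => p \in I (sigma 0)
  | NAtom p => p \notin I (sigma 0)
  | Tt => True
  | Ff => False
  | And a b => sat sigma a /\ sat sigma b
  | Or a b => sat sigma a \/ sat sigma b
  | Next a => sat (wsuffix 1 sigma) a
  | Until a b => exists n, (forall j, j < n -> sat (wsuffix j sigma) a)
                           /\ sat (wsuffix n sigma) b
  | Release a b => forall n, sat (wsuffix n sigma) b
                             \/ exists j, j < n /\ sat (wsuffix j sigma) a
  end.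

(* A conjunction of temporal formulae is represented by the list of its
   conjuncts (order/duplicates are irrelevant; tt is the empty list).
   Sets of such conjunctions are represented by lists. *)
Definition conj := seq (ltl AP).

Definition conj_formula (c : conj) : ltl AP := foldr (@And AP) Tt c.

Definition conj_prod (A B : seq conj) : seq conj :=
  [seq a ++ b | a <- A, b <- B].

Fixpoint SIMP (phi : ltl AP) : seq conj :=
  match phi with
  | And a b => conj_prod (SIMP a) (SIMP b)
  | Or a b => SIMP a ++ SIMP b
  | Tt => [:: [::]]
  | _ => [:: [:: phi]]
  end.

Fixpoint Delta (x : Sigma) (phi : ltl AP) : seq conj :=
  match phi with
  | Tt => [:: [::]]
  | Ff => [::]
  | Atom p => if p \in I x then [:: [::]] else [::]
  | NAtom p => if p \notin I x then [:: [::]] else [::]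
  | Or a b => Delta x a ++ Delta x b
  | And a b => conj_prod (Delta x a) (Delta x b)
  | Next a => SIMP a
  | Until a b => Delta x b ++ [seq a' ++ [:: phi] | a' <- Delta x a]
  | Release a b => conj_prod (Delta x a) (Delta x b)
                   ++ [seq b' ++ [:: phi] | b' <- Delta x b]
  end.

End Sem.

(* Main.v *)
Require Import Defs.
From Stdlib Require List.
From Stdlib Require Import Classical.
From mathcomp Require Import all_boot.

Section Aux.
Variables (AP Sigma : finType) (I : Sigma -> {set AP}).

Lemma sat_ext (phi : ltl AP) : forall (s t : word Sigma),
  (forall i, s i = t i) -> sat I s phi -> sat I t phi.
Proof.
elim: phi => [p|p|||a IHa b IHb|a IHa b IHb|a IHa|a IHa b IHb|a IHa b IHb] s t E /=.
- by rewrite E.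
- by rewrite E.
- by [].
- by [].
- by case=> [Ha Hb]; split; [apply: IHa Ha|apply: IHb Hb].
- by case=> [Ha|Hb]; [left; apply: IHa Ha|right; apply: IHb Hb].
- by apply: IHa => i; rewrite /wsuffix E.
- case=> n [H1 H2]; exists n; split.
    by move=> j Hj; apply: IHa (H1 j Hj) => i; rewrite /wsuffix E.
  by apply: IHb H2 => i; rewrite /wsuffix E.
- move=> H n; case: (H n) => [Hb|[j [Hj Ha]]].
    by left; apply: IHb Hb => i; rewrite /wsuffix E.
  by right; exists j; split => //; apply: IHa Ha => i; rewrite /wsuffix E.
Qed.

Lemma ws0 (s : word Sigma) phi : sat I (wsuffix 0 s) phi <-> sat I s phi.
Proof. by split; apply: sat_ext. Qed.

Lemma wsS (s : word Sigma) j phi :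
  sat I (wsuffix j (wsuffix 1 s)) phi <-> sat I (wsuffix j.+1 s) phi.
Proof. by split; apply: sat_ext => i; rewrite /wsuffix. Qed.

Lemma sat_cat (s : word Sigma) (a b : conj AP) :
  sat I s (conj_formula (a ++ b)) <->
  sat I s (conj_formula a) /\ sat I s (conj_formula b).
Proof.
elim: a => [|x a IH] /=; first by tauto.
rewrite IH; tauto.
Qed.

Lemma in_prod (A B : seq (conj AP)) c :
  List.In c (conj_prod A B) <->
  exists a b, [/\ List.In a A, List.In b B & c = a ++ b].
Proof.
rewrite /conj_prod; elim: A => [|a A IH] /=.
  by split => // [[a [b [[]]]]].
rewrite List.in_app_iff IH List.in_map_iff; split.
  case=> [[b [<- Hb]]|[a' [b [Ha Hb ->]]]].
    by exists a, b; split => //; left.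
  by exists a', b; split => //; right.
case=> [a' [b [[<-|Ha] Hb ->]]].
  by left; exists b.
by right; exists a', b.
Qed.

Lemma sat_prod (s : word Sigma) A B :
  (exists2 c, List.In c (conj_prod A B) & sat I s (conj_formula c)) <->
  (exists2 c, List.In c A & sat I s (conj_formula c)) /\
  (exists2 c, List.In c B & sat I s (conj_formula c)).
Proof.
split.
  case=> c /in_prod [a [b [Ha Hb ->]]] /sat_cat [H1 H2].
  by split; [exists a|exists b].
case=> [[a Ha H1] [b Hb H2]]; exists (a ++ b).
  by apply/in_prod; exists a, b.
by apply/sat_cat.
Qed.

Lemma sat_app (s : word Sigma) A B :
  (exists2 c, List.In c (A ++ B) & sat I s (conj_formula c)) <->
  (exists2 c, List.In c A & sat I s (conj_formula c)) \/
  (exists2 c, List.In c B & sat I s (conj_formula c)).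
Proof.
split.
  by case=> c /List.in_app_iff [H|H] Hc; [left|right]; exists c.
by case=> [[c H Hc]|[c H Hc]]; exists c => //; apply/List.in_app_iff; [left|right].
Qed.

Lemma sat_single (s : word Sigma) phi :
  (exists2 c, List.In c [:: [:: phi]] & sat I s (conj_formula c)) <-> sat I s phi.
Proof.
split; first by case=> c [<-|[]] /= [].
by move=> H; exists [:: phi]; [left|].
Qed.

Lemma sat_SIMP (s : word Sigma) phi :
  sat I s phi <-> exists2 c, List.In c (SIMP phi) & sat I s (conj_formula c).
Proof.
elim: phi => [p|p|||a IHa b IHb|a IHa b IHb|a IHa|a IHa b IHb|a IHa b IHb];
  try (by rewrite [SIMP _]/= sat_single).
- by split => // _; exists [::]; [left|].
- by rewrite [SIMP _]/= sat_prod -IHa -IHb.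
- by rewrite [SIMP _]/= sat_app -IHa -IHb.
Qed.

Lemma sat_map (s : word Sigma) A phi :
  (exists2 c, List.In c [seq a' ++ [:: phi] | a' <- A] & sat I s (conj_formula c)) <->
  (exists2 c, List.In c A & sat I s (conj_formula c)) /\ sat I s phi.
Proof.
split.
  case=> c /List.in_map_iff [a [<- Ha]] /sat_cat [H1 [H2 _]].
  by split => //; exists a.
case=> [[a Ha H1] H2]; exists (a ++ [:: phi]).
  by apply/List.in_map_iff; exists a.
by apply/sat_cat.
Qed.

Lemma until_unfold (s : word Sigma) a b :
  sat I s (Until a b) <->
  sat I s b \/ (sat I s a /\ sat I (wsuffix 1 s) (Until a b)).
Proof.
split => /=.
  case=> [[|n] [H1 H2]]; first by left; apply: sat_ext H2.
  right; split; first by apply: sat_ext (H1 0 erefl).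
  exists n; split; last by apply: sat_ext H2.
  by move=> j Hj; apply: sat_ext (H1 j.+1 Hj).
case=> [Hb|[Ha [n [H1 H2]]]]; first by exists 0; split => //; apply: sat_ext Hb.
exists n.+1; split; last by apply: sat_ext H2.
case=> [|j] Hj; first by apply: sat_ext Ha.
by apply: sat_ext (H1 j Hj).
Qed.

Lemma release_unfold (s : word Sigma) a b :
  sat I s (Release a b) <->
  sat I s b /\ (sat I s a \/ sat I (wsuffix 1 s) (Release a b)).
Proof.
split => /=.
  move=> H; split.
    by case: (H 0) => [Hb|[j []]] //; apply: sat_ext Hb.
  case: (classic (sat I s a)) => Ha; first by left.
  right => n; case: (H n.+1) => [Hb|[[|j] [Hj Hja]]].
  - by left; apply: sat_ext Hb.
  - by exfalso; apply: Ha; apply: sat_ext Hja.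
  - by right; exists j; split => //; apply: sat_ext Hja.
case=> [Hb HH] [|n]; first by left; apply: sat_ext Hb.
case: HH => [Ha|H]; first by right; exists 0; split => //; apply: sat_ext Ha.
case: (H n) => [Hb'|[j [Hj Hja]]]; first by left; apply: sat_ext Hb'.
by right; exists j.+1; split => //; apply: sat_ext Hja.
Qed.

End Aux.

Theorem lemma9 (AP Sigma : finType) (I : Sigma -> {set AP})
    (phi : ltl AP) (sigma : word Sigma) :
  sat I sigma phi <->
  exists2 phi' : conj AP, List.In phi' (Delta I (sigma 0) phi) &
    sat I (wsuffix 1 sigma) (conj_formula phi').
Proof.
elim: phi sigma => [p|p|||a IHa b IHb|a IHa b IHb|a IHa|a IHa b IHb|a IHa b IHb] sigma.
- case E: (p \in I (sigma 0)); rewrite /= E; split => //;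
    try (by move=> _; exists [::]; [left|]); by case.
- case E: (p \in I (sigma 0)); rewrite /= E; split => //;
    try (by move=> _; exists [::]; [left|]); by case.
- by split => // _; exists [::]; [left|].
- by split => //; case.
- by rewrite /= sat_prod -IHa -IHb.
- by rewrite /= sat_app -IHa -IHb.
- exact: (@sat_SIMP _ _ I (wsuffix 1 sigma) a).
- rewrite until_unfold [Delta _ _ _]/= sat_app sat_map -IHa -IHb; tauto.
- rewrite release_unfold [Delta _ _ _]/= sat_app sat_map sat_prod -IHa -IHb; tauto.
Qed.
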